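(* Let $W_0$ be the set of ordinals $\le \Omega$, where $\Omega$ is the first uncountable ordinal, with the order topology, and let $W=W_0\setminus\{\Omega\}$ with the subspace topology. Then $(C(W,W_0),\tau_\Gamma)$ is not regular.
   Context: For topological spaces $X,Y$, $C(X,Y)$ denotes the set of continuous maps $X\to Y$; each $f\in C(X,Y)$ is identified with its graph $\{(x,f(x)):x\in X\}\subset X\times Y$. For $G$ open in $X\times Y$ let $F_G=\{f\in C(X,Y): f\subset G\}$. The graph topology $\tau_\Gamma$ on $C(X,Y)$ is the topology having the sets $F_G$ ($G$ open in $X\times Y$) as a base. *)

(* Defs.v *)
From Stdlib Require Import Classical.



(* A "topology" on X is given by its predicate of open sets. *)
Definition set (X : Type) := X -> Prop.

Definition lbound {T : Type} (lt : T -> T -> Prop) (l : option T) (y : T) : Prop :=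
  match l with Some a => lt a y | None => True end.
Definition ubound {T : Type} (lt : T -> T -> Prop) (r : option T) (y : T) : Prop :=
  match r with Some b => lt y b | None => True end.

(* U is open in the order topology iff every point of U lies in some basic
   interval (l, r) (endpoints optional, i.e. rays / whole space) contained in U. *)
Definition order_open {T : Type} (lt : T -> T -> Prop) (U : set T) : Prop :=
  forall x, U x -> exists l r : option T,
    lbound lt l x /\ ubound lt r x /\
    forall y, lbound lt l y -> ubound lt r y -> U y.

Definition subspace_open {X : Type} (P : X -> Prop) (openX : set X -> Prop)
  (V : set {x : X | P x}) : Prop :=
  exists U, openX U /\ forall z, V z <-> U (proj1_sig z).

Definition prod_open {X Y : Type} (openX : set X -> Prop) (openY : set Y -> Prop)
  (G : set (X * Y)) : Prop :=
  forall p, G p -> exists (U : set X) (V : set Y),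
    openX U /\ openY V /\ U (fst p) /\ V (snd p) /\
    forall x y, U x -> V y -> G (x, y).

Definition continuous {X Y : Type} (openX : set X -> Prop) (openY : set Y -> Prop)
  (f : X -> Y) : Prop :=
  forall V, openY V -> openX (fun x => V (f x)).

Definition Cfun {X Y : Type} (openX : set X -> Prop) (openY : set Y -> Prop) : Type :=
  {f : X -> Y | continuous openX openY f}.

Definition graph_in {X Y : Type} (f : X -> Y) (G : set (X * Y)) : Prop :=
  forall x, G (x, f x).

Definition F_G {X Y : Type} (openX : set X -> Prop) (openY : set Y -> Prop)
  (G : set (X * Y)) : set (Cfun openX openY) :=
  fun f => graph_in (proj1_sig f) G.

(* Graph topology: the topology with base { F_G : G open in X x Y }. *)
Definition graph_open {X Y : Type} (openX : set X -> Prop) (openY : set Y -> Prop)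
  (U : set (Cfun openX openY)) : Prop :=
  forall f, U f -> exists G, prod_open openX openY G /\ F_G openX openY G f /\
    forall g, F_G openX openY G g -> U g.

Definition regular {Z : Type} (openZ : set Z -> Prop) : Prop :=
  forall (C : set Z) (z : Z), openZ (fun w => ~ C w) -> ~ C z ->
    exists U V : set Z, openZ U /\ openZ V /\ U z /\ (forall w, C w -> V w) /\
      (forall w, U w -> V w -> False).

(* ---------- (T, lt) is (order-isomorphic to) the ordinals <= omega_1,
   with Omega = omega_1 its largest element ---------- *)
Definition countable_below {T : Type} (lt : T -> T -> Prop) (a : T) : Prop :=
  exists f : nat -> T, forall x, lt x a -> exists n, f n = x.

Definition is_omega1_plus1 {T : Type} (lt : T -> T -> Prop) (Omega : T) : Prop :=
  (forall x, ~ lt x x) /\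
  (forall x y z, lt x y -> lt y z -> lt x z) /\
  (forall x y, lt x y \/ x = y \/ lt y x) /\
  well_founded lt /\
  (forall x, x <> Omega -> lt x Omega) /\
  (forall a, lt a Omega -> countable_below lt a) /\
  ~ countable_below lt Omega.

(* W0 = [0, Omega] with the order topology; W = W0 \ {Omega} as a subspace. *)
Definition W {T : Type} (Omega : T) : Type := {x : T | x <> Omega}.
Definition W_open {T : Type} (lt : T -> T -> Prop) (Omega : T) : set (W Omega) -> Prop :=
  subspace_open (fun x => x <> Omega) (order_open lt).

(* Main.v *)
Require Import Defs.
From Stdlib Require Import Classical ClassicalEpsilon ProofIrrelevance Arith Cantor.

Lemma wf_min {T} (lt : T -> T -> Prop) (wf : well_founded lt) (P : T -> Prop) x :
  P x -> exists m, P m /\ forall u, P u -> ~ lt u m.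
Proof.
  intros Px. apply NNPP; intro Hn.
  assert (forall y, ~ P y) as A.
  { intro y. induction (wf y) as [y _ IH]. intro Py. apply Hn. exists y. split; auto.
    intros u Pu Hu. exact (IH u Hu Pu). }
  exact (A x Px).
Qed.

Lemma strict_ub {T} (lt : T -> T -> Prop) Omega (HT : is_omega1_plus1 lt Omega)
  (e : nat -> T) : (forall n, lt (e n) Omega) -> exists u, lt u Omega /\ forall n, lt (e n) u.
Proof.
  destruct HT as (irr & tr & tri & wf & bel & cb & ncb).
  intros He. apply NNPP; intro Hn. apply ncb.
  assert (Hf : forall n, exists f : nat -> T, forall x, lt x (e n) -> exists k, f k = x)
    by (intro n; apply cb; auto).
  set (F := fun n => epsilon (inhabits (fun _:nat => e n))
                        (fun f : nat -> T => forall x, lt x (e n) -> exists k, f k = x)).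
  assert (HF : forall n x, lt x (e n) -> exists k, F n k = x).
  { intros n. apply (epsilon_spec (inhabits (fun _ : nat => e n))
       (fun f => forall x, lt x (e n) -> exists k, f k = x)). apply Hf. }
  exists (fun k => let '(n, m) := of_nat k in match m with 0 => e n | S m' => F n m' end).
  intros x Hx.
  assert (exists n, ~ lt (e n) x) as [n Hn'].
  { apply NNPP; intro H2. apply Hn. exists x. split; auto. intro n. apply NNPP. intro H3.
    apply H2. eauto. }
  destruct (tri x (e n)) as [H1 | [H1 | H1]].
  - destruct (HF n x H1) as [k Hk]. exists (to_nat (n, S k)). rewrite cancel_of_to. exact Hk.
  - exists (to_nat (n, 0)). rewrite cancel_of_to. auto.
  - contradiction.
Qed.

Lemma lb_inter {T} (lt : T -> T -> Prop)
  (tr : forall x y z, lt x y -> lt y z -> lt x z)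
  (tri : forall x y, lt x y \/ x = y \/ lt y x) l1 l2 (t : T) :
  lbound lt l1 t -> lbound lt l2 t ->
  exists l, lbound lt l t /\ forall y, lbound lt l y -> lbound lt l1 y /\ lbound lt l2 y.
Proof.
  destruct l1 as [a|], l2 as [b|]; simpl; intros H1 H2.
  - destruct (tri a b) as [h|[h|h]].
    + exists (Some b). simpl. split; auto. intros y Hy. split; eauto.
    + subst. exists (Some b). simpl. auto.
    + exists (Some a). simpl. split; auto. intros y Hy. split; eauto.
  - exists (Some a). simpl. auto.
  - exists (Some b). simpl. auto.
  - exists None. simpl. auto.
Qed.

Lemma ub_inter {T} (lt : T -> T -> Prop)
  (tr : forall x y z, lt x y -> lt y z -> lt x z)
  (tri : forall x y, lt x y \/ x = y \/ lt y x) l1 l2 (t : T) :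
  ubound lt l1 t -> ubound lt l2 t ->
  exists l, ubound lt l t /\ forall y, ubound lt l y -> ubound lt l1 y /\ ubound lt l2 y.
Proof.
  destruct l1 as [a|], l2 as [b|]; simpl; intros H1 H2.
  - destruct (tri a b) as [h|[h|h]].
    + exists (Some a). simpl. split; auto. intros y Hy. split; eauto.
    + subst. exists (Some b). simpl. auto.
    + exists (Some b). simpl. split; auto. intros y Hy. split; eauto.
  - exists (Some a). simpl. auto.
  - exists (Some b). simpl. auto.
  - exists None. simpl. auto.
Qed.

Lemma modify_cont {T} (lt : T -> T -> Prop) Omega (HT : is_omega1_plus1 lt Omega)
  (x0 p r c : T) :
  lt p x0 -> lt x0 r -> (forall t, lt p t -> lt t r -> t = x0) ->
  continuous (W_open lt Omega) (order_open lt)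
    (fun x : W Omega => if excluded_middle_informative (proj1_sig x = x0) then c else proj1_sig x).
Proof.
  destruct HT as (irr & tr & tri & wf & bel & cb & ncb).
  intros Hp Hr Hiso V HV.
  exists (fun t => (t = x0 /\ V c) \/ (t <> x0 /\ t <> Omega /\ V t)). split.
  - intros t [[-> Vc] | [Hne [HnO Vt]]].
    + exists (Some p), (Some r). simpl. split; [auto|split; [auto|]].
      intros y Hy1 Hy2. left. split; auto.
    + destruct (HV t Vt) as (l & r' & Hl & Hr' & Hin).
      assert (HtO : lt t Omega) by (apply bel; auto).
      destruct (ub_inter lt tr tri r' (Some Omega) t Hr' HtO) as (r2 & Hr2 & Hr2i).
      destruct (tri t x0) as [h|[h|h]]; [| contradiction |].
      * destruct (ub_inter lt tr tri r2 (Some x0) t Hr2 h) as (r3 & Hr3 & Hr3i).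
        exists l, r3. split; auto. split; auto. intros y Hly Hry.
        destruct (Hr3i y Hry) as [A1 A2]. destruct (Hr2i y A1) as [A3 A4].
        simpl in A2, A4. right. split; [|split].
        -- intro E; subst; apply (irr _ A2).
        -- intro E; subst; apply (irr _ A4).
        -- apply Hin; auto.
      * destruct (lb_inter lt tr tri l (Some x0) t Hl h) as (l3 & Hl3 & Hl3i).
        exists l3, r2. split; auto. split; auto. intros y Hly Hry.
        destruct (Hl3i y Hly) as [A1 A2]. destruct (Hr2i y Hry) as [A3 A4].
        simpl in A2, A4. right. split; [|split].
        -- intro E; subst; apply (irr _ A2).
        -- intro E; subst; apply (irr _ A4).
        -- apply Hin; auto.
  - intro z. destruct (excluded_middle_informative (proj1_sig z = x0)) as [E|E]; split.
    + intro Vc. left; auto.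
    + intros [[_ Vc] | [Hne _]]; auto; contradiction.
    + intro Vz. right. split; auto. split; [exact (proj2_sig z) | auto].
    + intros [[E' _]|[_ [_ Vz]]]; [contradiction | auto].
Qed.

Lemma key {T} (lt : T -> T -> Prop) Omega (HT : is_omega1_plus1 lt Omega)
  (H : set (W Omega * T)) :
  prod_open (W_open lt Omega) (order_open lt) H ->
  (forall x : W Omega, H (x, proj1_sig x)) ->
  exists (x0 : W Omega) (p r : T), lt p (proj1_sig x0) /\ lt (proj1_sig x0) r /\
    (forall t, lt p t -> lt t r -> t = proj1_sig x0) /\
    forall b, lt b Omega -> exists y, lt b y /\ lt y Omega /\ H (x0, y).
Proof.
  intros Hopen Hdiag.
  pose proof HT as HT0. destruct HT0 as (irr & tr & tri & wf & bel & cb & ncb).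
  apply NNPP; intro NK.
  assert (exists x, lt x Omega) as [x00 Hx00].
  { apply NNPP; intro N. apply ncb. exists (fun _ => Omega). intros x Hx. exfalso; apply N; eauto. }
  set (succT := fun t => epsilon (inhabits t) (fun u => lt t u /\ forall v, lt t v -> ~ lt v u)).
  assert (Hsucc : forall t, lt t Omega -> lt t (succT t) /\
            (forall v, lt t v -> ~ lt v (succT t)) /\ lt (succT t) Omega).
  { intros t Ht. assert (E: exists u, lt t u /\ forall v, lt t v -> ~ lt v u).
    { destruct (wf_min lt wf (fun u => lt t u) Omega Ht) as [m [Hm1 Hm2]]. eauto. }
    pose proof (epsilon_spec (inhabits t) _ E) as [S1 S2].
    change (epsilon (inhabits t) (fun u => lt t u /\ forall v, lt t v -> ~ lt v u)) with (succT t) in S1, S2.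
    split; [exact S1|]. split; [exact S2|].
    destruct (strict_ub lt Omega HT (fun _ => t) (fun _ => Ht)) as [u [Hu1 Hu2]].
    specialize (Hu2 0). simpl in Hu2.
    destruct (tri (succT t) u) as [h|[h|h]]; [eauto | rewrite h; auto | exfalso; apply (S2 u Hu2 h)]. }
  set (bnd := fun t => epsilon (inhabits t) (fun b => lt b Omega /\ forall (px : t <> Omega) y,
                lt b y -> lt y Omega -> ~ H (exist _ t px, y))).
  assert (Hbnd : forall q, lt q Omega -> lt (bnd (succT q)) Omega /\
           forall (px : succT q <> Omega) y, lt (bnd (succT q)) y -> lt y Omega ->
             ~ H (exist _ (succT q) px, y)).
  { intros q Hq. destruct (Hsucc q Hq) as (S1 & S2 & S3).
    assert (S4 : lt (succT q) (succT (succT q))) by apply (Hsucc _ S3).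
    assert (px0 : succT q <> Omega) by (intro E; rewrite E in S3; apply (irr _ S3)).
    assert (E : exists b, lt b Omega /\ forall (px : succT q <> Omega) y,
                lt b y -> lt y Omega -> ~ H (exist _ (succT q) px, y)).
    { apply NNPP; intro NB. apply NK. exists (exist _ (succT q) px0), q, (succT (succT q)).
      simpl. split; [auto|]. split; [auto|]. split.
      - intros t Ht1 Ht2. destruct (tri t (succT q)) as [h|[h|h]]; auto.
        + exfalso; apply (S2 t Ht1 h).
        + exfalso. destruct (Hsucc _ S3) as (_ & S5 & _). apply (S5 t h Ht2).
      - intros b Hb. apply NNPP; intro NY. apply NB. exists b. split; auto.
        intros px y Hby HyO HH. apply NY. exists y. split; auto. split; auto.
        replace px0 with px by apply proof_irrelevance. auto. }
    exact (epsilon_spec (inhabits (succT q)) _ E). }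
  set (maxT := fun a b : T => if excluded_middle_informative (lt a b) then b else a).
  assert (Hmax : forall a b, (lt a (maxT a b) \/ a = maxT a b) /\ (lt b (maxT a b) \/ b = maxT a b)).
  { intros a b. unfold maxT. destruct (excluded_middle_informative (lt a b)) as [h|h].
    - auto.
    - split; auto. destruct (tri b a) as [h1|[h1|h1]]; auto. contradiction. }
  set (step := fun t => maxT (succT t) (bnd (succT t))).
  set (q := fun n => Nat.iter n step x00).
  assert (Hq : forall n, lt (q n) Omega).
  { induction n as [|n IH]; [exact Hx00|].
    change (q (S n)) with (step (q n)). unfold step.
    destruct (Hsucc _ IH) as (_ & _ & S3). destruct (Hbnd _ IH) as [B1 _].
    unfold maxT. destruct (excluded_middle_informative _); auto. }
  set (e := fun n => succT (q n)).
  assert (HeO : forall n, lt (e n) Omega) by (intro n; apply (Hsucc _ (Hq n))).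
  assert (le_lt : forall a b c, (lt a b \/ a = b) -> lt b c -> lt a c).
  { intros a b c [h|h] h2; [eauto | subst; auto]. }
  assert (Hinc : forall n, lt (e n) (e (S n)) /\ lt (bnd (e n)) (e (S n))).
  { intro n. change (e (S n)) with (succT (step (q n))).
    assert (Hs : lt (step (q n)) (succT (step (q n)))).
    { apply Hsucc. change (step (q n)) with (q (S n)). apply Hq. }
    unfold step in *. destruct (Hmax (succT (q n)) (bnd (succT (q n)))) as [M1 M2].
    split; eapply le_lt; eauto. }
  destruct (strict_ub lt Omega HT e HeO) as [u [Hu1 Hu2]].
  destruct (wf_min lt wf (fun u => forall n, lt (e n) u) u Hu2) as [lam [Hl1 Hl2]].
  assert (HlO : lt lam Omega).
  { destruct (tri lam u) as [h|[h|h]]; [eauto | rewrite h; auto | exfalso; apply (Hl2 u Hu2 h)]. }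
  assert (Hlam : forall a, lt a lam -> exists n, lt a (e n)).
  { intros a Ha. assert (exists n, ~ lt (e n) a) as [n Hn].
    { apply NNPP; intro N. apply (Hl2 a); auto. intro n. apply NNPP; intro N2. apply N; eauto. }
    destruct (tri a (e n)) as [h|[h|h]]; [eauto | | contradiction].
    exists (S n). rewrite h. apply Hinc. }
  assert (pl : lam <> Omega) by (intro E; rewrite E in HlO; apply (irr _ HlO)).
  destruct (Hopen (exist _ lam pl, lam) (Hdiag (exist _ lam pl)))
    as (U & V & HU & HV & Ul & Vl & Hin).
  destruct HU as [U' [HU' Heq]].
  simpl in Ul. apply Heq in Ul. simpl in Ul.
  destruct (HU' lam Ul) as (l & r & Hl & Hr & Hin').
  assert (exists n, lbound lt l (e n)) as [n Hn].
  { destruct l as [a|]; simpl in Hl |- *.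
    - apply Hlam; auto.
    - exists 0; auto. }
  assert (pe : e n <> Omega) by (intro E; pose proof (HeO n) as h; rewrite E in h; apply (irr _ h)).
  assert (Ue : U (exist _ (e n) pe)).
  { apply Heq. simpl. apply Hin'; auto. destruct r as [r'|]; simpl in Hr |- *; auto. eauto. }
  pose proof (Hin _ _ Ue Vl) as HH. simpl in HH.
  destruct (Hbnd (q n) (Hq n)) as [_ B2].
  apply (B2 pe lam); auto.
  destruct (Hinc n) as [_ I2]. eauto.
Qed.

Theorem mainTheorem2 (T : Type) (lt : T -> T -> Prop) (Omega : T)
  (HT : is_omega1_plus1 lt Omega) :
  ~ regular (graph_open (W_open lt Omega) (order_open lt)).
Proof.
  intro Hreg.
  pose proof HT as HT0. destruct HT0 as (irr & tr & tri & wf & bel & cb & ncb).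
  assert (idc : continuous (W_open lt Omega) (order_open lt) (fun x : W Omega => proj1_sig x)).
  { intros V HV. exists V. split; [exact HV | intro z; tauto]. }
  set (z := exist _ _ idc : Cfun (W_open lt Omega) (order_open lt)).
  set (C := fun h : Cfun (W_open lt Omega) (order_open lt) => exists x, proj1_sig h x = Omega).
  destruct (Hreg C z) as (U & V & HU & HV & Uz & CV & disj).
  - intros f Hf. exists (fun pq : W Omega * T => snd pq <> Omega). split; [|split].
    + intros [x y] Hy. simpl in Hy. exists (fun _ => True), (fun y => y <> Omega).
      split; [|split; [|split; [|split]]].
      * exists (fun _ => True). split; [|intros; tauto].
        intros t _. exists None, None. simpl. auto.
      * intros y0 Hy0. exists None, (Some Omega). simpl. split; auto. split; [apply bel; auto|].
        intros y1 _ Hy1 E. subst. apply (irr _ Hy1).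
      * exact I.
      * exact Hy.
      * intros x1 y1 _ Hy1. exact Hy1.
    + intro x. simpl. intro E. apply Hf. exists x. exact E.
    + intros g Hg [x Hx]. apply (Hg x). exact Hx.
  - intros [x Hx]. simpl in Hx. exact (proj2_sig x Hx).
  - destruct (HU z Uz) as (H & HH & FH & HFU).
    assert (FH' : forall x : W Omega, H (x, proj1_sig x)) by exact FH.
    destruct (key lt Omega HT H HH FH') as (x0 & p & r & Hp & Hr & Hiso & Hcof).
    set (h := exist _ _ (modify_cont lt Omega HT (proj1_sig x0) p r Omega Hp Hr Hiso)
              : Cfun (W_open lt Omega) (order_open lt)).
    assert (Ch : C h).
    { exists x0. simpl. destruct (excluded_middle_informative _); [reflexivity | contradiction]. }
    destruct (HV h (CV h Ch)) as (K & HK & FK & HKV).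
    assert (FKx0 : K (x0, Omega)).
    { pose proof (FK x0) as F0. simpl in F0.
      destruct (excluded_middle_informative _) in F0; [exact F0 | contradiction]. }
    destruct (HK (x0, Omega) FKx0) as (U1 & V1 & _ & HV1 & U1x0 & V1O & Hin1).
    simpl in U1x0, V1O.
    destruct (HV1 Omega V1O) as (l & r1 & Hl & Hr1 & Hin2).
    assert (exists b, lt b Omega /\ forall y, lt b y -> lt y Omega -> V1 y) as [b [Hb HbV]].
    { assert (Hu : forall y, lt y Omega -> ubound lt r1 y).
      { intros y Hy. destruct r1 as [t|]; simpl in Hr1 |- *; eauto. }
      destruct l as [b|]; simpl in Hl.
      - exists b. split; [exact Hl|]. intros y Hby HyO. apply Hin2; simpl; auto.
      - exists (proj1_sig x0). split; [apply bel; exact (proj2_sig x0)|].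
        intros y _ HyO. apply Hin2; simpl; auto. }
    destruct (Hcof b Hb) as (y & Hby & HyO & Hxy).
    set (g := exist _ _ (modify_cont lt Omega HT (proj1_sig x0) p r y Hp Hr Hiso)
              : Cfun (W_open lt Omega) (order_open lt)).
    assert (FHg : F_G (W_open lt Omega) (order_open lt) H g).
    { intro x. simpl. destruct (excluded_middle_informative (proj1_sig x = proj1_sig x0)) as [E|E].
      - replace x with x0; auto.
        destruct x as [x px], x0 as [x0' px0]. simpl in E. subst.
        f_equal. apply proof_irrelevance.
      - apply FH'. }
    assert (FKg : F_G (W_open lt Omega) (order_open lt) K g).
    { intro x. pose proof (FK x) as Fx. simpl in Fx |- *.
      destruct (excluded_middle_informative (proj1_sig x = proj1_sig x0)) as [E|E].
      - replace x with x0.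
        + apply Hin1; auto.
        + destruct x as [x px], x0 as [x0' px0]. simpl in E. subst.
          f_equal. apply proof_irrelevance.
      - exact Fx. }
    exact (disj g (HFU g FHg) (HKV g FKg)).
Qed.
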